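(* Let $R$ be a commutative ring with identity, let $A$ be a $2\times 2$ matrix over $R$, and let $\mathbf u$ be a unimodular row of length $2$ over $R$. Then $\mathbf u$ belongs to the submodule of $R^2$ generated by the rows of $A$ if and only if there exists an invertible $2\times 2$ matrix $P$ over $R$ such that $\mathbf u$ is the first row of $PA$.
   Context: A row $[r_1,\dots,r_n]$ over $R$ is unimodular if $r_1,\dots,r_n$ generate the unit ideal $R$. *)

(* Defs.v *)
From HB Require Import structures.
From mathcomp Require Import all_boot all_order all_algebra.
Set Implicit Arguments. Unset Strict Implicit. Unset Printing Implicit Defensive.
Import GRing.Theory.
Local Open Scope ring_scope.

Definition unimodular_row (R : comPzRingType) (n : nat) (u : 'rV[R]_n) : Prop :=
  exists c : 'rV[R]_n, \sum_(i < n) c 0 i * u 0 i = 1.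

Definition in_row_module (R : comPzRingType) (n m : nat)
    (u : 'rV[R]_m) (A : 'M[R]_(n, m)) : Prop :=
  exists x : 'rV[R]_n, u = x *m A.

Definition invertible_mx (R : comPzRingType) (n : nat) (P : 'M[R]_n) : Prop :=
  exists Q : 'M[R]_n, P *m Q = 1%:M /\ Q *m P = 1%:M.

(* Main.v *)
Require Import Defs.
From HB Require Import structures.
From mathcomp Require Import all_boot all_order all_algebra.
From mathcomp Require Import ring.
Local Open Scope ring_scope.
Import GRing.Theory.

Lemma sum2 (R : comPzRingType) (F : 'I_2 -> R) : \sum_(i < 2) F i = F 0 + F 1.
Proof. rewrite big_ord_recl big_ord1; congr (_ + F _); exact: val_inj. Qed.

Lemma ord2 (i : 'I_2) : i = 0 \/ i = 1.
Proof. case: i => [[|[|//]] Hi]; [left|right]; exact: val_inj. Qed.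

Theorem lemma2p3 (R : comPzRingType) (A : 'M[R]_2) (u : 'rV[R]_2) :
  unimodular_row u ->
  (in_row_module u A <->
   exists P : 'M[R]_2, invertible_mx P /\ row 0 (P *m A) = u).
Proof.
move=> [c Hc]; split; last first.
  by move=> [P [_ <-]]; exists (row 0 P); rewrite row_mul.
move=> [x Hx]; subst u.
move: Hc; rewrite !sum2 !mxE !sum2 => Hc.
set d0 := A 0 0 * c 0 0 + A 0 1 * c 0 1.
set d1 := A 1 0 * c 0 0 + A 1 1 * c 0 1.
have Hd : x 0 0 * d0 + x 0 1 * d1 = 1.
  by rewrite -Hc /d0 /d1; ring.
exists (\matrix_(i < 2, j < 2)
   if (i : nat) == 0%N then x 0 j else (if (j : nat) == 0%N then - d1 else d0)).
split.
  exists (\matrix_(i < 2, j < 2)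
   if (j : nat) == 0%N then (if (i : nat) == 0%N then d0 else d1)
   else (if (i : nat) == 0%N then - x 0 1 else x 0 0)).
  split; apply/matrixP => i j; rewrite !mxE !sum2 !mxE;
  case: (ord2 i) => ->; case: (ord2 j) => -> /=;
  rewrite -?Hd; try ring.
rewrite row_mul; congr (_ *m A).
apply/matrixP => i j; rewrite !mxE (ord1 i) /=.
by [].
Qed.
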